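(* Let $A=(0,0)$, $B=(1,0)$, $C=(1,1)$, $D=(0,1)$ be the vertices of the unit square in the Euclidean plane $\mathbb{R}^2$. There is no point $P$ lying on the boundary of this square (that is, on one of its four edges $AB$, $BC$, $CD$, $DA$) such that the four Euclidean distances $|PA|$, $|PB|$, $|PC|$, $|PD|$ are all rational numbers.
   Context: Distances are ordinary Euclidean distances in $\mathbb{R}^2$. *)

(* Defs.v *)
From Stdlib Require Import Reals QArith Qreals.
Open Scope R_scope.

Definition dist2 (p q : R * R) : R :=
  sqrt ((fst p - fst q) ^ 2 + (snd p - snd q) ^ 2).

Definition is_rational (x : R) : Prop := exists q : Q, Q2R q = x.

Definition ptA : R * R := (0, 0).
Definition ptB : R * R := (1, 0).
Definition ptC : R * R := (1, 1).
Definition ptD : R * R := (0, 1).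

Definition on_square_boundary (P : R * R) : Prop :=
  (0 <= fst P <= 1 /\ snd P = 0) \/
  (fst P = 1 /\ 0 <= snd P <= 1) \/
  (0 <= fst P <= 1 /\ snd P = 1) \/
  (fst P = 0 /\ 0 <= snd P <= 1).

(* Main.v *)
Require Import Defs.
From Stdlib Require Import Reals QArith Qreals.
From Stdlib Require Import ZArith Znumtheory Lia Psatz Lra.
Open Scope R_scope.

Local Open Scope Z_scope.

Lemma gcd1_of x y : (forall d, (d | x) -> (d | y) -> (d | 1)) -> Z.gcd x y = 1.
Proof.
  intros H. apply Z.divide_1_r_nonneg. apply Z.gcd_nonneg.
  apply H; [apply Z.gcd_divide_l | apply Z.gcd_divide_r].
Qed.

Lemma gcd1_div x y d : Z.gcd x y = 1 -> (d | x) -> (d | y) -> (d | 1).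
Proof. intros H H1 H2. rewrite <- H. apply Z.gcd_greatest; auto. Qed.

Lemma gcd1_mul_r a b c : Z.gcd a b = 1 -> Z.gcd a c = 1 -> Z.gcd a (b*c) = 1.
Proof.
  intros H1 H2. apply Zgcd_1_rel_prime. apply rel_prime_mult; apply Zgcd_1_rel_prime; auto.
Qed.

Lemma gcd1_mul_l a b c : Z.gcd a c = 1 -> Z.gcd b c = 1 -> Z.gcd (a*b) c = 1.
Proof.
  intros H1 H2. rewrite Z.gcd_comm. apply gcd1_mul_r; rewrite Z.gcd_comm; auto.
Qed.

Lemma par x : (exists k, x = 2*k) \/ (exists k, x = 2*k+1).
Proof.
  destruct (Z.Even_or_Odd x) as [[k Hk]|[k Hk]]; [left|right]; exists k; lia.
Qed.

Lemma oddsq x k : x = 2*k+1 -> exists j, x*x = 8*j+1.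
Proof.
  intros ->. destruct (par k) as [[m ->]|[m ->]].
  - exists (m*(2*m+1)). ring.
  - exists ((2*m+1)*(m+1)). ring.
Qed.

Lemma sqpar x : (exists k, x = 2*k /\ x*x = 4*(k*k)) \/ (exists j, x = 2*j+1 /\ exists i, x*x = 8*i+1).
Proof.
  destruct (par x) as [[k Hk]|[k Hk]].
  - left. exists k. split; [lia| subst; ring].
  - right. exists k. split; auto. eapply oddsq; eauto.
Qed.

Lemma div5 d : (d | 5) -> d = 1 \/ d = -1 \/ d = 5 \/ d = -5.
Proof.
  intros H. assert (Z.abs d <= 5).
  { apply Z.divide_pos_le; [lia|]. apply Z.divide_abs_l; auto. }
  destruct H as [k Hk].
  assert (-5 <= d <= 5) by lia.
  assert (d = -5 \/ d = -4 \/ d = -3 \/ d = -2 \/ d = -1 \/ d = 0 \/ d = 1 \/ d = 2 \/ d = 3 \/ d = 4 \/ d = 5) by lia.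
  repeat match goal with H: _ \/ _ |- _ => destruct H end; subst; lia.
Qed.

Lemma sq_coprime x y z : 0 <= x -> 0 <= y -> Z.gcd x y = 1 -> x*y = z*z ->
  exists p, 0 <= p /\ x = p*p.
Proof.
  intros Hx Hy Hg E.
  set (p := Z.gcd x z).
  assert (Hp : 0 <= p) by apply Z.gcd_nonneg.
  exists p. split; auto.
  destruct (Z.eq_dec p 0) as [H0|H0].
  { pose proof H0 as H1. apply Z.gcd_eq_0 in H0. rewrite H1. lia. }
  destruct (Z.gcd_divide_l x z) as [x' Hx'].
  destruct (Z.gcd_divide_r x z) as [z' Hz'].
  fold p in Hx', Hz'.
  assert (Hg' : Z.gcd x' z' = 1).
  { assert (Z.gcd (x'*p) (z'*p) = Z.gcd x' z' * Z.abs p) by apply Z.gcd_mul_mono_r.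
    rewrite <- Hx', <- Hz' in H. fold p in H. rewrite Z.abs_eq in H by lia. nia. }
  assert (E2 : x' * y = p * (z'*z')).
  { apply (Z.mul_reg_l _ _ p); auto. rewrite Hx', Hz' in E. nia. }
  assert (D1 : (x' | p)).
  { apply (Z.gauss _ (z'*z')). exists y. lia.
    apply gcd1_mul_r; auto. }
  assert (D2 : (p | x')).
  { apply (Z.gauss _ y). exists (z'*z'). lia.
    apply gcd1_of. intros d Hd1 Hd2. apply (gcd1_div x y); auto.
    apply (Z.divide_trans _ p); auto. exists x'. auto. }
  assert (0 <= x') by nia.
  assert (Exp : x' = p) by (apply Z.divide_antisym_nonneg; auto).
  rewrite Hx'. rewrite Exp. ring.
Qed.

Lemma sq_eq a b : 0 <= a -> 0 <= b -> a*a = b*b -> a = b.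
Proof. intros. nia. Qed.

Lemma fourth_coprime x y z : 0 <= x -> 0 <= y -> Z.gcd x y = 1 -> x*y = z*z*z*z ->
  exists u v, 0 <= u /\ 0 <= v /\ x = u*u*u*u /\ y = v*v*v*v /\ u*v*(u*v) = z*z /\ Z.gcd u v = 1.
Proof.
  intros Hx Hy Hg E.
  destruct (sq_coprime x y (z*z)) as [p [Hp Ep]]; auto. lia.
  destruct (sq_coprime y x (z*z)) as [q [Hq Eq]]; auto. rewrite Z.gcd_comm; auto. lia.
  assert (Hpq : p*q = z*z).
  { apply sq_eq; nia. }
  assert (Hg2 : Z.gcd p q = 1).
  { apply gcd1_of. intros d H1 H2. apply (gcd1_div x y); auto.
    rewrite Ep. apply Z.divide_mul_l; auto. rewrite Eq. apply Z.divide_mul_l; auto. }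
  destruct (sq_coprime p q z) as [u [Hu Eu]]; auto.
  destruct (sq_coprime q p z) as [v [Hv Ev]]; auto. rewrite Z.gcd_comm; auto. lia.
  exists u, v. repeat split; auto.
  - subst. ring.
  - subst. ring.
  - nia.
  - apply gcd1_of. intros d H1 H2. apply (gcd1_div p q); auto.
    rewrite Eu. apply Z.divide_mul_l; auto. rewrite Ev. apply Z.divide_mul_l; auto.
Qed.

Lemma sq_div a X W : a <> 0 -> a*a*X = W*W -> exists M, X = M*M.
Proof.
  intros Ha E.
  set (g := Z.gcd a W).
  assert (Hg : 0 < g).
  { assert (0 <= g) by apply Z.gcd_nonneg.
    destruct (Z.eq_dec g 0) as [H0|]; [apply Z.gcd_eq_0 in H0; lia | lia]. }
  destruct (Z.gcd_divide_l a W) as [a1 Ha1].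
  destruct (Z.gcd_divide_r a W) as [w1 Hw1].
  fold g in Ha1, Hw1.
  assert (Hg' : Z.gcd a1 w1 = 1).
  { assert (Z.gcd (a1*g) (w1*g) = Z.gcd a1 w1 * Z.abs g) by apply Z.gcd_mul_mono_r.
    rewrite <- Ha1, <- Hw1 in H. fold g in H. rewrite Z.abs_eq in H by lia. nia. }
  assert (E2 : a1*a1*X = w1*w1).
  { apply (Z.mul_reg_l _ _ (g*g)). nia. rewrite Ha1, Hw1 in E. nia. }
  assert (D : (a1 | w1)).
  { apply (Z.gauss _ w1); auto. exists (a1*X). lia. }
  assert (D1 : (a1 | 1)) by (apply (gcd1_div a1 w1); auto; apply Z.divide_refl).
  apply Z.divide_1_r in D1. exists w1. rewrite <- E2. destruct D1 as [D1|D1]; rewrite D1; ring.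
Qed.

Definition SQ (f g : Z) := f*f*f*f + 3*(f*f)*(g*g) + g*g*g*g.

Lemma neg_case f1 g1 u v f :
  u = f1*g1 -> v*v = 3*(u*u) - f1*f1*f1*f1 - g1*g1*g1*g1 ->
  (exists k, f = 2*k+1) ->
  f*f = 5*(u*u*u*u) - 6*(u*u)*(v*v) + v*v*v*v -> False.
Proof.
  intros Hu E2 [n Hn] E1. subst u f.
  destruct (par f1) as [[k ->]|[k ->]]; destruct (par g1) as [[l ->]|[l ->]];
  destruct (par v) as [[m ->]|[m ->]]; lia.
Qed.

Lemma stepB u v f : 0 <= u -> 0 <= v -> Z.gcd u v = 1 -> u <> 0 ->
  (exists k, f = 2*k+1) ->
  f*f = 5*(u*u*u*u) - 6*(u*u)*(v*v) + v*v*v*v ->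
  exists f1 g1, f1 <> 0 /\ g1 <> 0 /\ f1*g1 = u /\ v*v = SQ f1 g1.
Proof.
  intros Hu Hv Hg Hu0 Hf E.
  set (Y := v*v - 3*(u*u)).
  assert (EY : (Y - f)*(Y + f) = 4*(u*u*u*u)) by (unfold Y; lia).
  assert (Hev : exists P1, Y - f = 2*P1).
  { destruct Hf as [n Hn]. destruct (par (Y - f)) as [[k Hk]|[k Hk]]; [exists k; auto|].
    exfalso. assert (Y + f = 2*k+1 + 2*f) by lia. rewrite Hk, H in EY. subst f. lia. }
  destruct Hev as [P1 HP1].
  set (P2 := P1 + f).
  assert (EP : P1 * P2 = u*u*u*u) by (unfold P2; nia).
  assert (HYs : Y = P1 + P2) by (unfold P2; lia).
  assert (Hg12 : Z.gcd P1 P2 = 1).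
  { apply gcd1_of. intros d H1 H2.
    assert (Hdu : Z.gcd d u = 1).
    { apply gcd1_of. intros c C1 C2. apply (gcd1_div u (v*v)).
      apply gcd1_mul_r; auto. auto.
      assert (v*v = P1 + P2 + 3*(u*u)) by (unfold Y in HYs; lia). rewrite H.
      apply Z.divide_add_r. apply Z.divide_add_r; apply (Z.divide_trans _ d); auto.
      apply Z.divide_mul_r. apply Z.divide_mul_l; auto. }
    apply (Z.gauss _ (u*u*u*u)). rewrite <- EP, Z.mul_1_r. apply Z.divide_mul_l; auto.
    repeat apply gcd1_mul_r; auto. }
  assert (Hpos : 0 < u*u*u*u) by (assert (0 < u) by lia; nia).
  destruct (Z.lt_ge_cases 0 P1) as [Hp|Hp].
  - assert (0 < P2) by nia.
    destruct (fourth_coprime P1 P2 u) as [f1 [g1 [Hf1 [Hg1 [E1 [E2 [E3 _]]]]]]]; try lia; auto.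
    exists f1, g1. assert (Hfg : f1*g1 = u) by (apply sq_eq; nia).
    repeat split; try (intro; subst; lia); auto.
    unfold SQ. assert (Hvv : v*v = P1 + P2 + 3*(u*u)) by (unfold Y in HYs; lia). rewrite Hvv, E1, E2, <- Hfg. ring.
  - assert (P1 < 0) by (destruct (Z.eq_dec P1 0); [subst; lia| lia]).
    assert (P2 < 0) by nia.
    destruct (fourth_coprime (-P1) (-P2) u) as [f1 [g1 [Hf1 [Hg1 [E1 [E2 [E3 _]]]]]]]; try lia.
    { rewrite Z.gcd_opp_l, Z.gcd_opp_r; auto. }
    exfalso. apply (neg_case f1 g1 u v f); auto.
    + apply sq_eq; nia.
    + assert (Hvv : v*v = P1 + P2 + 3*(u*u)) by (unfold Y in HYs; lia). rewrite Hvv.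
      assert (Hfg : u = f1*g1) by (apply sq_eq; nia). rewrite Hfg. ring_simplify. lia.
Qed.

Lemma stepA f h M : Z.gcd f (2*h) = 1 -> (exists k, f = 2*k+1) -> h <> 0 ->
  M*M = SQ f (2*h) ->
  exists f1 g1 M1, f1 <> 0 /\ g1 <> 0 /\ Z.abs (f1*g1) < Z.abs (f*(2*h)) /\ M1*M1 = SQ f1 g1.
Proof.
  intros Hg Hf Hh E.
  set (M' := Z.abs M).
  assert (HM' : M'*M' = M*M) by (unfold M'; destruct (Z.abs_spec M); nia).
  assert (HM0 : 0 <= M') by (unfold M'; lia).
  clearbody M'. rewrite <- HM' in E. clear HM' M. rename M' into M.
  destruct Hf as [k Hk].
  set (X := f*f + 6*(h*h)).
  assert (EX : X*X - M*M = 20*(h*h*h*h)) by (unfold X; rewrite E; unfold SQ; ring).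
  assert (HXo : X = 2*(2*k*k+2*k+3*(h*h))+1) by (unfold X; subst f; ring).
  assert (HMo : exists m, M = 2*m+1).
  { destruct (par M) as [[m Hm]|[m Hm]]; [|exists m; auto].
    exfalso. unfold SQ in E. subst M f. lia. }
  destruct HMo as [m Hm].
  assert (HAB : exists A B, X = A + B /\ M = B - A).
  { exists (2*k*k+2*k+3*(h*h) - m), (2*k*k+2*k+3*(h*h) + m + 1). lia. }
  destruct HAB as [A [B [HX HM]]].
  assert (EAB : A*B = 5*(h*h*h*h)) by (rewrite HX, HM in EX; ring_simplify in EX; lia).
  assert (Hh2 : 0 < h*h) by (destruct (proj1 (Z.lt_gt_cases h 0) Hh) as [Hl|Hl]; [apply Z.mul_neg_neg|apply Z.mul_pos_pos]; lia).
  assert (Hh4 : 0 < h*h*h*h) by (replace (h*h*h*h) with ((h*h)*(h*h)) by ring; apply Z.mul_pos_pos; auto).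
  assert (HX0 : 0 <= X) by (unfold X; pose proof (Z.square_nonneg f); pose proof (Z.square_nonneg h); lia).
  assert (HXM : M < X).
  { destruct (Z.lt_ge_cases M X) as [|Hc]; auto. exfalso.
    pose proof (Z.mul_le_mono_nonneg X M X M HX0 Hc HX0 Hc). lia. }
  assert (HA : 0 < A) by lia.
  assert (HB : 0 < B) by lia.
  assert (Hff : Z.gcd (f*f) (2*h) = 1) by (apply gcd1_mul_l; auto).
  assert (HgAB : Z.gcd A B = 1).
  { apply gcd1_of. intros d H1 H2.
    assert (Hdh : Z.gcd d h = 1).
    { apply gcd1_of. intros c C1 C2. apply (gcd1_div (f*f) (2*h)); auto.
      - assert (f*f = A + B - 6*(h*h)) by (unfold X in HX; lia). rewrite H.
        apply Z.divide_sub_r. apply Z.divide_add_r; apply (Z.divide_trans _ d); auto.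
        apply Z.divide_mul_r. apply Z.divide_mul_l; auto.
      - apply Z.divide_mul_r; auto. }
    assert (Hdh4 : Z.gcd d (h*h*h*h) = 1) by (repeat apply gcd1_mul_r; auto).
    assert (Hd5 : (d | 5)).
    { apply (Z.gauss _ (h*h*h*h)); auto. exists (A/d * B). 
      destruct H1 as [a1 Ha1]. rewrite Ha1 in EAB |- *.
      destruct (Z.eq_dec d 0) as [Hd0|Hd0]; [subst; lia|].
      rewrite Z.div_mul by auto. lia. }
    destruct (div5 d Hd5) as [ -> | [ -> | [ -> | -> ] ] ].
    - apply Z.divide_refl.
    - exists (-1). lia.
    - exfalso. destruct H1 as [a1 Ha1]. destruct H2 as [b1 Hb1].
      assert (Hd : (5 | h*h*h*h)) by (exists (a1*b1); rewrite Ha1, Hb1 in EAB; ring_simplify in EAB; lia).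
      pose proof (gcd1_div 5 (h*h*h*h) 5 Hdh4 (Z.divide_refl _) Hd) as Hc.
      apply Z.divide_1_r in Hc. lia.
    - exfalso. destruct H1 as [a1 Ha1]. destruct H2 as [b1 Hb1].
      assert (Hd : (-5 | h*h*h*h)) by (exists (-(a1*b1)); rewrite Ha1, Hb1 in EAB; ring_simplify in EAB; lia).
      pose proof (gcd1_div (-5) (h*h*h*h) (-5) Hdh4 (Z.divide_refl _) Hd) as Hc.
      apply Z.divide_1_r in Hc. lia. }
  assert (Huv : exists u v, 0 <= u /\ 0 <= v /\ Z.gcd u v = 1 /\
             f*f = 5*(u*u*u*u) - 6*(u*u)*(v*v) + v*v*v*v /\ u*v*(u*v) = h*h).
  { assert (H5 : (5 | A) \/ (5 | B)).
    { assert (Hge : 0 <= Z.gcd 5 A) by apply Z.gcd_nonneg.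
      destruct (div5 (Z.gcd 5 A) (Z.gcd_divide_l _ _)) as [He|[He|[He|He]]]; try lia.
      - right. apply (Z.gauss _ A); auto. exists (h*h*h*h). lia.
      - left. rewrite <- He. apply Z.gcd_divide_r. }
    destruct H5 as [[a1 Ha1]|[b1 Hb1]].
    - assert (E1 : a1*B = h*h*h*h) by (rewrite Ha1 in EAB; ring_simplify in EAB; lia).
      destruct (fourth_coprime a1 B h) as [u [v [Hu [Hv [Eu [Ev [Euv Gu]]]]]]]; auto; try lia.
      { apply gcd1_of. intros d D1 D2. apply (gcd1_div A B); auto.
        rewrite Ha1. apply Z.divide_mul_l; auto. }
      exists u, v. repeat split; auto.
      assert (f*f = X - 6*(h*h)) by (unfold X; ring). rewrite H, HX, Ha1, Eu, Ev, <- Euv. ring.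
    - assert (E1 : b1*A = h*h*h*h) by (rewrite Hb1 in EAB; ring_simplify in EAB; lia).
      destruct (fourth_coprime b1 A h) as [u [v [Hu [Hv [Eu [Ev [Euv Gu]]]]]]]; auto; try lia.
      { apply gcd1_of. intros d D1 D2. apply (gcd1_div A B); auto.
        rewrite Hb1. apply Z.divide_mul_l; auto. }
      exists u, v. repeat split; auto.
      assert (f*f = X - 6*(h*h)) by (unfold X; ring). rewrite H, HX, Hb1, Eu, Ev, <- Euv. ring. }
  destruct Huv as [u [v [Hu [Hv [Guv [Ef Euv]]]]]].
  assert (Hu0 : u <> 0) by (intro; subst; nia).
  assert (Hv0 : v <> 0) by (intro; subst; nia).
  destruct (stepB u v f Hu Hv Guv Hu0 (ex_intro _ k Hk) Ef) as [f1 [g1 [F1 [G1 [Efg Ev]]]]].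
  exists f1, g1, v. repeat split; auto.
  assert (Hab : u*v = Z.abs h).
  { apply sq_eq. apply Z.mul_nonneg_nonneg; auto. lia. rewrite Euv.
    destruct (Z.abs_spec h) as [[_ ->]|[_ ->]]; ring. }
  rewrite Efg, Z.abs_mul. rewrite Z.abs_eq by lia.
  assert (1 <= Z.abs f) by lia.
  assert (Z.abs (2*h) = 2 * Z.abs h) by lia.
  assert (u*1 <= u*v) by (apply Z.mul_le_mono_nonneg_l; lia).
  assert (1 * Z.abs (2*h) <= Z.abs f * Z.abs (2*h)) by (apply Z.mul_le_mono_nonneg_r; lia).
  lia.
Qed.

Lemma SQ_sym f g : SQ f g = SQ g f.
Proof. unfold SQ; ring. Qed.

Lemma core_n (n : nat) : forall f g M, Z.abs (f*g) < Z.of_nat n -> f <> 0 -> g <> 0 ->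
  M*M = SQ f g -> False.
Proof.
  induction n as [|n IH]; intros f g M Hn Hf Hg E.
  - lia.
  - set (d := Z.gcd f g).
    assert (Hd0 : 0 <= d) by apply Z.gcd_nonneg.
    assert (Hdn : d <> 0) by (intro H; apply Z.gcd_eq_0 in H; lia).
    destruct (Z.gcd_divide_l f g) as [f' Hf'].
    destruct (Z.gcd_divide_r f g) as [g' Hg'].
    fold d in Hf', Hg'.
    destruct (Z.eq_dec d 1) as [Hd1|Hd1].
    +
      assert (Hg1 : Z.gcd f g = 1) by auto.
      destruct (par f) as [[k Hk]|[k Hk]]; destruct (par g) as [[l Hl]|[l Hl]].
      * exfalso. assert (H2 : (2 | 1)).
        { apply (gcd1_div f g); auto; [exists k | exists l]; lia. }
        apply Z.divide_1_r in H2. lia.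
      *
        assert (Hk0 : k <> 0) by lia.
        destruct (stepA g k M) as [f1 [g1 [M1 [F1 [G1 [Hlt E1]]]]]].
        { rewrite <- Hk, Z.gcd_comm. auto. }
        { exists l; auto. }
        { auto. }
        { rewrite <- Hk, SQ_sym. auto. }
        apply (IH f1 g1 M1); auto.
        rewrite <- Hk in Hlt. rewrite Z.mul_comm in Hlt. lia.
      * destruct (stepA f l M) as [f1 [g1 [M1 [F1 [G1 [Hlt E1]]]]]].
        { rewrite <- Hl. auto. }
        { exists k; auto. }
        { lia. }
        { rewrite <- Hl. auto. }
        apply (IH f1 g1 M1); auto.
        rewrite <- Hl in Hlt. lia.
      * exfalso. unfold SQ in E.
        destruct (oddsq f k Hk) as [i Hi]. destruct (oddsq g l Hl) as [j Hj].
        rewrite Hi, Hj in E.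
        destruct (sqpar M) as [[m [_ Hm]]|[m [_ [i' Hi']]]]; rewrite Hm in E || rewrite Hi' in E; lia.
    + assert (Hd2 : 2 <= d) by lia.
      assert (Hf0 : f' <> 0) by (intro Hz; rewrite Hz in Hf'; lia).
      assert (Hg0 : g' <> 0) by (intro Hz; rewrite Hz in Hg'; lia).
      destruct (sq_div (d*d) (SQ f' g') M) as [M' HM'].
      { nia. }
      { rewrite E, Hf', Hg'. unfold SQ. ring. }
      apply (IH f' g' M'); auto.
      rewrite Hf', Hg' in Hn.
      assert (Habs : Z.abs (f'*d*(g'*d)) = Z.abs (f'*g') * (d*d)).
      { rewrite !Z.abs_mul. rewrite (Z.abs_eq d) by lia. ring. }
      assert (1 <= Z.abs (f'*g')) by (rewrite Z.abs_mul; nia).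
      assert (Z.abs (f'*g') * 1 < Z.abs (f'*g') * (d*d)) by (apply Z.mul_lt_mono_pos_l; nia).
      lia.
Qed.

Lemma core f g M : f <> 0 -> g <> 0 -> M*M = SQ f g -> False.
Proof.
  intros. apply (core_n (S (Z.to_nat (Z.abs (f*g)))) f g M); auto. lia.
Qed.

Lemma pyth a c h U : 0 <= a -> Z.gcd a c = 1 -> c = 2*h -> 0 < h -> U*U = a*a + c*c ->
  exists p q, 0 <= p /\ 0 <= q /\ a = p*p - q*q /\ h = p*q.
Proof.
  intros Ha Hg Hc Hh E.
  set (U' := Z.abs U).
  assert (HU' : U'*U' = U*U) by (unfold U'; destruct (Z.abs_spec U) as [[_ ->]|[_ ->]]; ring).
  assert (HU0 : 0 <= U') by (unfold U'; lia).
  clearbody U'. rewrite <- HU' in E. clear HU' U. rename U' into U.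
  assert (EY : (U - a)*(U + a) = 4*(h*h)) by (rewrite Hc in E; lia).
  assert (Hev : exists y1, U - a = 2*y1).
  { destruct (par (U - a)) as [[k Hk]|[k Hk]]; [exists k; auto|].
    exfalso. assert (H : U + a = 2*k+1 + 2*a) by lia. rewrite Hk, H in EY. lia. }
  destruct Hev as [y1 Hy1].
  set (x1 := y1 + a).
  assert (Exy : x1*y1 = h*h) by (unfold x1; nia).
  assert (HUa : a <= U).
  { destruct (Z.lt_ge_cases U a) as [Hlt|]; auto. exfalso.
    assert (U*U < a*a) by (apply Z.mul_lt_mono_nonneg; lia).
    pose proof (Z.square_nonneg c). lia. }
  assert (Hy0 : 0 <= y1) by lia.
  assert (Hx0 : 0 <= x1) by (unfold x1; lia).
  assert (Hgx : Z.gcd x1 y1 = 1).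
  { apply gcd1_of. intros d D1 D2. apply (gcd1_div a (c*c)).
    - apply gcd1_mul_r; auto.
    - replace a with (x1 - y1) by (unfold x1; ring). apply Z.divide_sub_r; auto.
    - replace (c*c) with (4*(x1*y1)) by (rewrite Exy, Hc; ring).
      apply Z.divide_mul_r. apply Z.divide_mul_l. auto. }
  destruct (sq_coprime x1 y1 h) as [p [Hp Ep]]; auto.
  destruct (sq_coprime y1 x1 h) as [q [Hq Eq]]; auto.
  all: try (rewrite Z.gcd_comm; auto); try (rewrite Z.mul_comm; auto).
  exists p, q. repeat split; auto.
  - replace a with (x1 - y1) by (unfold x1; ring). rewrite Ep, Eq. ring.
  - symmetry. apply sq_eq.
    + apply Z.mul_nonneg_nonneg; auto.
    + lia.
    + rewrite <- Exy, Ep, Eq. ring.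
Qed.

Lemma not_two V : V*V <> 2.
Proof.
  intro E. destruct (sqpar V) as [[m [_ Hm]]|[m [_ [i Hi]]]]; lia.
Qed.

Lemma main_coprime a b U V : Z.gcd a b = 1 -> 0 <= a -> 0 <= b ->
  U*U = a*a + (a+b)*(a+b) -> V*V = b*b + (a+b)*(a+b) -> False.
Proof.
  intros Hg Ha Hb EU EV.
  destruct (Z.eq_dec a 0) as [Ha0|Ha0].
  { subst a. rewrite Z.gcd_0_l in Hg. rewrite Z.abs_eq in Hg by lia. subst b.
    apply (not_two V). lia. }
  destruct (Z.eq_dec b 0) as [Hb0|Hb0].
  { subst b. rewrite Z.gcd_0_r in Hg. rewrite Z.abs_eq in Hg by lia. subst a.
    apply (not_two U). lia. }
  destruct (par a) as [[k Hk]|[k Hk]]; destruct (par b) as [[l Hl]|[l Hl]].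
  - assert (H2 : (2 | 1)).
    { apply (gcd1_div a b); auto; [exists k | exists l]; lia. }
    apply Z.divide_1_r in H2. lia.
  - destruct (oddsq b l Hl) as [i Hi]. destruct (oddsq (a+b) (k+l) ltac:(lia)) as [j Hj].
    rewrite Hi, Hj in EV.
    destruct (sqpar V) as [[m [_ Hm]]|[m [_ [i' Hi']]]]; lia.
  - destruct (oddsq a k Hk) as [i Hi]. destruct (oddsq (a+b) (k+l) ltac:(lia)) as [j Hj].
    rewrite Hi, Hj in EU.
    destruct (sqpar U) as [[m [_ Hm]]|[m [_ [i' Hi']]]]; lia.
  - set (h := k + l + 1).
    assert (Hc : a + b = 2*h) by (unfold h; lia).
    assert (Hh : 0 < h) by (unfold h; lia).
    assert (Gac : Z.gcd a (a+b) = 1).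
    { apply gcd1_of. intros d D1 D2. apply (gcd1_div a b); auto.
      replace b with (a + b - a) by ring. apply Z.divide_sub_r; auto. }
    assert (Gbc : Z.gcd b (a+b) = 1).
    { apply gcd1_of. intros d D1 D2. apply (gcd1_div a b); auto.
      replace a with (a + b - b) by ring. apply Z.divide_sub_r; auto. }
    destruct (pyth a (a+b) h U Ha Gac Hc Hh EU) as [p [q [Hp [Hq [Ea Epq]]]]].
    destruct (pyth b (a+b) h V Hb Gbc Hc Hh EV) as [r [s [Hr [Hs [Eb Ers]]]]].
    assert (Hq0 : q <> 0) by (intro Hz; rewrite Hz in Epq; lia).
    assert (Hs0 : s <> 0) by (intro Hz; rewrite Hz in Ers; lia).
    assert (Hsum : p*p - q*q + (r*r - s*s) = 2*(r*s)) by lia.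
    assert (Hpq : p*q = r*s) by lia.
    assert (K : (r*r - q*q)*(s*s+q*q) = 2*(r*s)*(q*q)).
    { transitivity ((p*p - q*q + (r*r - s*s))*(q*q) - (p*q)*(p*q) + (r*s)*(r*s)).
      ring. rewrite Hsum, Hpq. ring. }
    set (W := (s*s+q*q)*r - s*(q*q)).
    assert (EW : q*q*SQ s q = W*W).
    { transitivity ((q*q)*SQ s q + (s*s+q*q)*((r*r-q*q)*(s*s+q*q) - 2*(r*s)*(q*q))).
      rewrite K. ring. unfold W, SQ. ring. }
    destruct (sq_div q (SQ s q) W Hq0 EW) as [M HM].
    apply (core s q M); auto.
Qed.

Lemma main_int a c U V : 0 <= a -> a <= c -> 0 < c ->
  U*U = a*a + c*c -> V*V = (c-a)*(c-a) + c*c -> False.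
Proof.
  intros Ha Hac Hc EU EV.
  set (b := c - a). assert (Hcb : c = a + b) by (unfold b; ring).
  fold b in EV. rewrite Hcb in EU, EV.
  assert (Hb : 0 <= b) by (unfold b; lia). clearbody b.
  set (d := Z.gcd a b).
  assert (Hd0 : 0 <= d) by apply Z.gcd_nonneg.
  assert (Hdn : d <> 0) by (intro H; apply Z.gcd_eq_0 in H; lia).
  destruct (Z.gcd_divide_l a b) as [a' Ha'].
  destruct (Z.gcd_divide_r a b) as [b' Hb'].
  fold d in Ha', Hb'.
  assert (Hg' : Z.gcd a' b' = 1).
  { assert (Z.gcd (a'*d) (b'*d) = Z.gcd a' b' * Z.abs d) by apply Z.gcd_mul_mono_r.
    rewrite <- Ha', <- Hb' in H. fold d in H. rewrite Z.abs_eq in H by lia. nia. }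
  destruct (sq_div d (a'*a' + (a'+b')*(a'+b')) U) as [U' HU']; auto.
  { rewrite EU, Ha', Hb'. ring. }
  destruct (sq_div d (b'*b' + (a'+b')*(a'+b')) V) as [V' HV']; auto.
  { rewrite EV, Ha', Hb'. ring. }
  apply (main_coprime a' b' U' V'); auto; nia.
Qed.

Local Open Scope R_scope.

Lemma posR (p : positive) : 0 < IZR (Z.pos p).
Proof. apply IZR_lt. lia. Qed.

Lemma keyR (t A B : Q) : 0 <= Q2R t <= 1 -> Q2R A * Q2R A = Q2R t * Q2R t + 1 ->
  Q2R B * Q2R B = (1 - Q2R t)*(1 - Q2R t) + 1 -> False.
Proof.
  destruct t as [tn td], A as [an ad], B as [bn bd]. unfold Q2R; simpl.
  pose proof (posR td) as HT. pose proof (posR ad) as HA. pose proof (posR bd) as HB.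
  set (T := IZR (Z.pos td)) in *. set (Ad := IZR (Z.pos ad)) in *. set (Bd := IZR (Z.pos bd)) in *.
  intros [H0 H1] EA EB.
  assert (Htn : 0 <= IZR tn).
  { assert (0 < / T) by (apply Rinv_0_lt_compat; auto). nra. }
  assert (Htn1 : IZR tn <= T).
  { assert (IZR tn = IZR tn * / T * T) by (field; lra). nra. }
  apply (main_int (tn*Z.pos ad*Z.pos bd) (Z.pos td*Z.pos ad*Z.pos bd)
                  (an*Z.pos td*Z.pos bd) (bn*Z.pos td*Z.pos ad)).
  - apply le_IZR. rewrite !mult_IZR. fold T Ad Bd. apply Rmult_le_pos; [apply Rmult_le_pos|]; lra.
  - apply le_IZR. rewrite !mult_IZR. fold T Ad Bd. apply Rmult_le_compat_r; [lra|].
    apply Rmult_le_compat_r; lra.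
  - lia.
  - apply eq_IZR. rewrite !plus_IZR, !mult_IZR. fold T Ad Bd.
    set (x := IZR tn) in *. set (y := IZR an) in *.
    assert (E : (y*T*Bd)*(y*T*Bd) - ((x*Ad*Bd)*(x*Ad*Bd) + (T*Ad*Bd)*(T*Ad*Bd))
              = (y * / Ad * (y * / Ad) - (x * / T * (x * / T) + 1)) * (T*Ad*Bd)*(T*Ad*Bd))
      by (field; lra).
    rewrite EA in E. lra.
  - apply eq_IZR. repeat (rewrite ?minus_IZR, ?plus_IZR, ?mult_IZR). fold T Ad Bd.
    set (x := IZR tn) in *. set (y := IZR bn) in *.
    assert (E : (y*T*Ad)*(y*T*Ad) - ((T*Ad*Bd - x*Ad*Bd)*(T*Ad*Bd - x*Ad*Bd) + (T*Ad*Bd)*(T*Ad*Bd))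
              = (y * / Bd * (y * / Bd) - ((1 - x * / T) * (1 - x * / T) + 1)) * (T*Ad*Bd)*(T*Ad*Bd))
      by (field; lra).
    rewrite EB in E. lra.
Qed.

Lemma keyR2 (x : R) : 0 <= x <= 1 -> is_rational x -> is_rational (sqrt (x^2 + 1)) ->
  is_rational (sqrt ((1-x)^2 + 1)) -> False.
Proof.
  intros Hx [t Ht] [A HA] [B HB].
  apply (keyR t A B).
  - rewrite Ht. auto.
  - rewrite HA, Ht. rewrite sqrt_sqrt; [ring|]. nra.
  - rewrite HB, Ht. rewrite sqrt_sqrt; [ring|]. nra.
Qed.

Lemma rat_eq x y : x = y -> is_rational x -> is_rational y.
Proof. intros ->; auto. Qed.

Theorem theorem1 :
  ~ (exists P : R * R,
       on_square_boundary P /\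
       is_rational (dist2 P ptA) /\ is_rational (dist2 P ptB) /\
       is_rational (dist2 P ptC) /\ is_rational (dist2 P ptD)).
Proof.
  intros [[x y] [Hb [HPA [HPB [HPC HPD]]]]].
  unfold on_square_boundary, dist2, ptA, ptB, ptC, ptD in *; cbn [fst snd] in *.
  destruct Hb as [[Hx Hy]|[[Hx Hy]|[[Hx Hy]|[Hx Hy]]]]; subst.
  - apply (keyR2 x); auto.
    + eapply rat_eq; [|exact HPA]. replace ((x-0)^2 + (0-0)^2) with (x^2) by ring.
      apply sqrt_pow2. lra.
    + eapply rat_eq; [|exact HPD]. f_equal. ring.
    + eapply rat_eq; [|exact HPC]. f_equal. ring.
  - apply (keyR2 y); auto.
    + eapply rat_eq; [|exact HPB]. replace ((1-1)^2 + (y-0)^2) with (y^2) by ring.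
      apply sqrt_pow2. lra.
    + eapply rat_eq; [|exact HPA]. f_equal. ring.
    + eapply rat_eq; [|exact HPD]. f_equal. ring.
  - apply (keyR2 x); auto.
    + eapply rat_eq; [|exact HPD]. replace ((x-0)^2 + (1-1)^2) with (x^2) by ring.
      apply sqrt_pow2. lra.
    + eapply rat_eq; [|exact HPA]. f_equal. ring.
    + eapply rat_eq; [|exact HPB]. f_equal. ring.
  - apply (keyR2 y); auto.
    + eapply rat_eq; [|exact HPA]. replace ((0-0)^2 + (y-0)^2) with (y^2) by ring.
      apply sqrt_pow2. lra.
    + eapply rat_eq; [|exact HPB]. f_equal. ring.
    + eapply rat_eq; [|exact HPC]. f_equal. ring.
Qed.
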